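(* Let $\mathcal{S}$ be a state space. Suppose there exists a state $s_0\in\mathcal{S}$ and a number $\lambda_0$ such that $e(s_0)=\lambda_0$ for all pure indecomposable effects $e$ on $\mathcal{S}$. Then $\lambda_{max}(\mathsf{M})=1/\lambda_0$ for every indecomposable measurement $\mathsf{M}$ on $\mathcal{S}$, and consequently $\lambda_{max}(\mathcal{S})=1/\lambda_0$.
   Context: General probabilistic theory setting: a state space $\mathcal{S}$ is a compact convex subset of a finite-dimensional real vector space, embedded as a base of a closed generating proper cone $V_+$ in a vector space $V$, so that $\mathcal{S}=\{x\in V_+ : u(x)=1\}$ for a strictly positive linear functional $u$ (the unit effect). An effect is a linear functional $e$ on $V$ with $0\le e(s)\le 1$ for all $s\in\mathcal{S}$; the set of effects is convex and its extreme points are called pure effects. A nonzero effect $e$ is indecomposable if whenever $e=e_1+e_2$ with $e_1,e_2$ nonzero effects, then $e=c_1e_1=c_2e_2$ for some $c_1,c_2>0$. For a linear functional $f$, $\|f\|=\max_{s\in\mathcal{S}}|f(s)|$. A measurement with finite outcome set $\Omega$ is a map $x\mapsto\mathsf{M}_x$ to effects with $\sum_x\mathsf{M}_x=u$; it is indecomposable if each of its nonzero effects is indecomposable. The decoding power is $\lambda_{max}(\mathsf{M})=\sum_x\|\mathsf{M}_x\|$, and the information storability of $\mathcal{S}$ is $\lambda_{max}(\mathcal{S})=\sup\{\lambda_{max}(\mathsf{M}) : \mathsf{M}$ a measurement on $\mathcal{S}$ with finite outcome set$\}$. *)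

(* Defs.v *)
From HB Require Import structures.
From mathcomp Require Import all_boot all_order all_algebra.
From mathcomp Require Import all_classical all_reals all_analysis.
Set Implicit Arguments. Unset Strict Implicit. Unset Printing Implicit Defensive.
Import Order.TTheory GRing.Theory Num.Theory.
Import numFieldNormedType.Exports.
Local Open Scope classical_set_scope.
Local Open Scope ring_scope.

(* The ambient vector space V is 'rV[R]_n; linear functionals on V are
   represented by column vectors f : 'cV[R]_n acting by x |-> x *m f. *)
Definition ev (R : realType) (n : nat) (f : 'cV[R]_n) (x : 'rV[R]_n) : R :=
  (x *m f) 0 0.

Definition gpt_cone (R : realType) (n : nat) (K : set 'rV[R]_n) (u : 'cV[R]_n) : Prop :=
  [/\ closed K,
      [/\ K 0, (forall x y, K x -> K y -> K (x + y))
         & (forall (a : R) x, 0 <= a -> K x -> K (a *: x))],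
      (forall v : 'rV[R]_n, exists x y, [/\ K x, K y & v = x - y]),
      (forall x, K x -> K (- x) -> x = 0)
    &
      (forall x, K x -> x != 0 -> 0 < ev u x)].

Definition states (R : realType) (n : nat) (K : set 'rV[R]_n) (u : 'cV[R]_n)
  : set 'rV[R]_n := [set x | K x /\ ev u x = 1].

Definition is_effect (R : realType) (n : nat) (K : set 'rV[R]_n) (u : 'cV[R]_n)
  (e : 'cV[R]_n) : Prop :=
  forall s, states K u s -> 0 <= ev e s <= 1.

Definition is_pure_effect (R : realType) (n : nat) (K : set 'rV[R]_n) (u : 'cV[R]_n)
  (e : 'cV[R]_n) : Prop :=
  is_effect K u e /\
  forall (e1 e2 : 'cV[R]_n) (t : R), is_effect K u e1 -> is_effect K u e2 ->
    0 < t < 1 -> e = t *: e1 + (1 - t) *: e2 -> e1 = e /\ e2 = e.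

Definition is_indecomposable (R : realType) (n : nat) (K : set 'rV[R]_n) (u : 'cV[R]_n)
  (e : 'cV[R]_n) : Prop :=
  is_effect K u e /\ e != 0 /\
  forall e1 e2 : 'cV[R]_n, is_effect K u e1 -> is_effect K u e2 ->
    e1 != 0 -> e2 != 0 -> e = e1 + e2 ->
    exists c1 c2 : R, 0 < c1 /\ 0 < c2 /\ e = c1 *: e1 /\ e = c2 *: e2.

Definition fnorm (R : realType) (n : nat) (K : set 'rV[R]_n) (u : 'cV[R]_n)
  (f : 'cV[R]_n) : R :=
  sup [set `|ev f s| | s in states K u].

Definition is_measurement (R : realType) (n : nat) (K : set 'rV[R]_n) (u : 'cV[R]_n)
  (Omega : finType) (M : Omega -> 'cV[R]_n) : Prop :=
  (forall x, is_effect K u (M x)) /\ \sum_(x : Omega) M x = u.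

Definition is_indecomposable_measurement (R : realType) (n : nat) (K : set 'rV[R]_n)
  (u : 'cV[R]_n) (Omega : finType) (M : Omega -> 'cV[R]_n) : Prop :=
  is_measurement K u M /\ forall x, M x != 0 -> is_indecomposable K u (M x).

Definition decoding_power (R : realType) (n : nat) (K : set 'rV[R]_n) (u : 'cV[R]_n)
  (Omega : finType) (M : Omega -> 'cV[R]_n) : R :=
  \sum_(x : Omega) fnorm K u (M x).

(* information storability, as an extended real (supremum over all
   measurements with a finite outcome set; finite outcome sets are taken
   to be 'I_m, m : nat, which covers every finite set up to bijection). *)
Definition info_storability (R : realType) (n : nat) (K : set 'rV[R]_n)
  (u : 'cV[R]_n) : \bar R :=
  ereal_sup [set (decoding_power K u (projT2 M))%:E |
     M in [set M : {m : nat & 'I_m -> 'cV[R]_n} | is_measurement K u (projT2 M)]]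
  .

(* Main.v *)
Require Import Defs.
From HB Require Import structures.
From mathcomp Require Import all_boot all_order all_algebra.
From mathcomp Require Import all_classical all_reals all_analysis.
Import Order.TTheory GRing.Theory Num.Theory.
From mathcomp Require Import lra.
Local Open Scope classical_set_scope.
Local Open Scope ring_scope.
Set Implicit Arguments. Unset Strict Implicit. Unset Printing Implicit Defensive.

Definition Cd (R : realType) (n : nat) (K : set 'rV[R]_n) (f : 'cV[R]_n) : Prop :=
  forall x, K x -> 0 <= ev f x.

Definition Dset (R : realType) (n : nat) (K : set 'rV[R]_n) (f d : 'cV[R]_n) : Prop :=
  exists2 c : R, 0 <= c & forall x, K x -> `|ev d x| <= c * ev f x.

Definition ext (R : realType) (n : nat) (K : set 'rV[R]_n) (f : 'cV[R]_n) : Prop :=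
  [/\ f != 0, Cd K f &
    forall g h, Cd K g -> Cd K h -> f = g + h -> exists2 c : R, 0 <= c & g = c *: f].

Lemma evDl (R : realType) (n : nat) (f g : 'cV[R]_n) (x : 'rV[R]_n) : ev (f + g) x = ev f x + ev g x.
Proof. by rewrite /ev mulmxDr mxE. Qed.
Lemma evZl (R : realType) (n : nat) (a : R) (f : 'cV[R]_n) (x : 'rV[R]_n) : ev (a *: f) x = a * ev f x.
Proof. by rewrite /ev -scalemxAr mxE. Qed.
Lemma evNl (R : realType) (n : nat) (f : 'cV[R]_n) (x : 'rV[R]_n) : ev (- f) x = - ev f x.
Proof. by rewrite /ev mulmxN mxE. Qed.
Lemma evBl (R : realType) (n : nat) (f g : 'cV[R]_n) (x : 'rV[R]_n) : ev (f - g) x = ev f x - ev g x.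
Proof. by rewrite evDl evNl. Qed.
Lemma ev0l (R : realType) (n : nat) (x : 'rV[R]_n) : ev 0 x = 0.
Proof. by rewrite /ev mulmx0 mxE. Qed.
Lemma evDr (R : realType) (n : nat) (f : 'cV[R]_n) (x y : 'rV[R]_n) : ev f (x + y) = ev f x + ev f y.
Proof. by rewrite /ev mulmxDl mxE. Qed.
Lemma evZr (R : realType) (n : nat) (a : R) (f : 'cV[R]_n) (x : 'rV[R]_n) : ev f (a *: x) = a * ev f x.
Proof. by rewrite /ev -scalemxAl mxE. Qed.
Lemma evBr (R : realType) (n : nat) (f : 'cV[R]_n) (x y : 'rV[R]_n) : ev f (x - y) = ev f x - ev f y.
Proof. by rewrite evDr -scaleN1r evZr mulN1r. Qed.
Lemma ev0r (R : realType) (n : nat) (f : 'cV[R]_n) : ev f 0 = 0.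
Proof. by rewrite /ev mul0mx mxE. Qed.
Lemma ev_suml (R : realType) (n : nat) (I : Type) (r : seq I) (P : pred I)
  (F : I -> 'cV[R]_n) x :
  ev (\sum_(i <- r | P i) F i) x = \sum_(i <- r | P i) ev (F i) x.
Proof.
elim/big_rec2: _ => [|i y1 y2 _ IH]; first by rewrite ev0l.
by rewrite evDl IH.
Qed.
Lemma ev_sumr (R : realType) (n : nat) (I : Type) (r : seq I) (P : pred I)
  (F : I -> 'rV[R]_n) f :
  ev f (\sum_(i <- r | P i) F i) = \sum_(i <- r | P i) ev f (F i).
Proof.
elim/big_rec2: _ => [|i y1 y2 _ IH]; first by rewrite ev0r.
by rewrite evDr IH.
Qed.

Lemma state_of (R : realType) (n : nat) (K : set 'rV[R]_n) (u : 'cV[R]_n) x :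
  gpt_cone K u -> K x -> x != 0 -> states K u ((ev u x)^-1 *: x).
Proof.
case=> _ [K0 KD KZ] _ _ upos Kx x0.
have hu := upos x Kx x0.
split; first by apply: KZ => //; rewrite invr_ge0 ltW.
by rewrite evZr mulVf // gt_eqF.
Qed.

Lemma Cd_of_effect (R : realType) (n : nat) (K : set 'rV[R]_n) (u : 'cV[R]_n) e :
  gpt_cone K u -> is_effect K u e -> Cd K e.
Proof.
move=> hK he x Kx.
have [->|x0] := eqVneq x 0; first by rewrite ev0r.
have /he /andP[h1 _] := state_of hK Kx x0.
move: h1; rewrite evZr.
case: hK => _ _ _ _ upos; have hu := upos x Kx x0.
by rewrite pmulr_rge0 // invr_gt0.
Qed.

Lemma Cd_add (R : realType) (n : nat) (K : set 'rV[R]_n) f g :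
  Cd K f -> Cd K g -> Cd K (f + g).
Proof. by move=> hf hg x Kx; rewrite evDl addr_ge0 // ?hf ?hg. Qed.

Lemma Cd_scale (R : realType) (n : nat) (K : set 'rV[R]_n) (a : R) f :
  0 <= a -> Cd K f -> Cd K (a *: f).
Proof. by move=> ha hf x Kx; rewrite evZl mulr_ge0 // hf. Qed.

Lemma Cd0 (R : realType) (n : nat) (K : set 'rV[R]_n) : Cd K 0.
Proof. by move=> x _; rewrite ev0l. Qed.

Lemma Cd_sum (R : realType) (n : nat) (K : set 'rV[R]_n) (I : eqType) (r : seq I)
  (F : I -> 'cV[R]_n) :
  (forall i, i \in r -> Cd K (F i)) -> Cd K (\sum_(i <- r) F i).
Proof.
move=> h; rewrite big_seq_cond; apply: (big_ind (Cd K)).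
- exact: Cd0.
- exact: Cd_add.
- by move=> i /andP[ir _]; exact: h.
Qed.

Lemma exists_x0 (R : realType) (n : nat) (K : set 'rV[R]_n) (u : 'cV[R]_n) :
  gpt_cone K u -> exists x0, K x0 /\ forall f, Cd K f -> ev f x0 = 0 -> f = 0.
Proof.
case=> _ [K0 KD KZ] Kgen _ _.
have gen : forall i : 'I_n, exists ab : 'rV[R]_n * 'rV[R]_n,
    [/\ K ab.1, K ab.2 & delta_mx 0 i = ab.1 - ab.2].
  move=> i; have [a [b [Ka Kb e]]] := Kgen (delta_mx 0 i).
  by exists (a, b).
have [ab Hab] := choice gen.
exists (\sum_i ((ab i).1 + (ab i).2)); split.
  apply: (big_ind K) => // i _; apply: KD; by case: (Hab i).
move=> f hf; rewrite ev_sumr => h0.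
have {}h0 : \sum_i (ev f (ab i).1 + ev f (ab i).2) = 0.
  by rewrite -[RHS]h0; apply: eq_bigr => i _; rewrite evDr.
have h1 := psumr_eq0P (P := xpredT) (F := fun i => ev f (ab i).1 + ev f (ab i).2) _ h0.
apply/matrixP => i j; rewrite (ord1 j) mxE.
case: (Hab i) => Ka Kb ei.
have hi : ev f (ab i).1 + ev f (ab i).2 = 0.
  apply: h1 => // k _; case: (Hab k) => Ka' Kb' _.
  by rewrite addr_ge0 //; apply: hf.
have ha := hf _ Ka; have hb := hf _ Kb.
have ea : ev f (ab i).1 = 0 by lra.
have eb : ev f (ab i).2 = 0 by lra.
have : ev f (delta_mx 0 i) = f i 0 by rewrite /ev -rowE mxE.
by rewrite ei evBr ea eb subr0 => <-.
Qed.

Lemma Cd_pointed (R : realType) (n : nat) (K : set 'rV[R]_n) (u : 'cV[R]_n) f :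
  gpt_cone K u -> Cd K f -> Cd K (- f) -> f = 0.
Proof.
move=> hK hf hnf; have [x0 [Kx0 H]] := exists_x0 hK.
apply: H => //; have := hf _ Kx0; have := hnf _ Kx0; rewrite evNl; lra.
Qed.

Lemma D_self (R : realType) (n : nat) (K : set 'rV[R]_n) f : Cd K f -> Dset K f f.
Proof. by move=> hf; exists 1 => // x Kx; rewrite mul1r ger0_norm // hf. Qed.

Lemma D0 (R : realType) (n : nat) (K : set 'rV[R]_n) f : Cd K f -> Dset K f 0.
Proof. by move=> hf; exists 0 => // x Kx; rewrite ev0l normr0 mul0r. Qed.

Lemma D_add (R : realType) (n : nat) (K : set 'rV[R]_n) f d1 d2 :
  Cd K f -> Dset K f d1 -> Dset K f d2 -> Dset K f (d1 + d2).
Proof.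
move=> hf [c1 c10 h1] [c2 c20 h2]; exists (c1 + c2); first exact: addr_ge0.
move=> x Kx; rewrite evDl mulrDl (le_trans (ler_normD _ _)) //.
by rewrite lerD // ?h1 ?h2.
Qed.

Lemma D_scale (R : realType) (n : nat) (K : set 'rV[R]_n) f (a : R) d :
  Dset K f d -> Dset K f (a *: d).
Proof.
move=> [c c0 h]; exists (`|a| * c); first by rewrite mulr_ge0.
move=> x Kx; rewrite evZl normrM -mulrA ler_wpM2l //; exact: h.
Qed.

Lemma D_opp (R : realType) (n : nat) (K : set 'rV[R]_n) f d :
  Dset K f d -> Dset K f (- d).
Proof. by move=> h; rewrite -scaleN1r; apply: D_scale. Qed.

Lemma D_sum (R : realType) (n : nat) (K : set 'rV[R]_n) f (I : Type) (r : seq I)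
  (F : I -> 'cV[R]_n) :
  Cd K f -> (forall i, Dset K f (F i)) -> Dset K f (\sum_(i <- r) F i).
Proof.
move=> hf h; apply: (big_ind (Dset K f)).
- exact: D0.
- by move=> a b; apply: D_add.
- by move=> i _; apply: h.
Qed.

Lemma D_mono (R : realType) (n : nat) (K : set 'rV[R]_n) f g (C : R) d :
  0 <= C -> (forall x, K x -> ev g x <= C * ev f x) -> Dset K g d -> Dset K f d.
Proof.
move=> C0 hC [c c0 h]; exists (c * C); first by rewrite mulr_ge0.
move=> x Kx; apply: (le_trans (h x Kx)); rewrite -mulrA ler_wpM2l //.
exact: hC.
Qed.

Lemma Cd_pert (R : realType) (n : nat) (K : set 'rV[R]_n) g (c : R) d :
  Cd K g -> 0 <= c -> (forall x, K x -> `|ev d x| <= c * ev g x) ->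
  Cd K (g + (1 + c)^-1 *: d).
Proof.
move=> hg c0 h x Kx; rewrite evDl evZl.
have gx := hg x Kx; have hx := h x Kx.
have c1 : 0 < 1 + c by lra.
have : - ev d x <= `|ev d x| by rewrite -normrN ler_norm.
move=> hn.
have e : (1 + c)^-1 * ev d x = ev d x / (1 + c) by rewrite mulrC.
rewrite e; rewrite -(@ler_pM2r _ (1 + c)) // mul0r mulrDl.
rewrite mulfVK ?gt_eqF //; nra.
Qed.

Lemma boundary (R : realType) (n : nat) (K : set 'rV[R]_n) f d :
  Cd K f -> Dset K f d -> ~ Cd K d ->
  exists t : R, [/\ 0 < t, Cd K (f + t *: d), ~ Dset K (f + t *: d) d &
    forall d', Dset K (f + t *: d) d' -> Dset K f d'].
Proof.
move=> hf [c c0 hc] nd.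
have [x1 [Kx1 dx1]] : exists x1, K x1 /\ ev d x1 < 0.
  move/existsNP: nd => [x1 /not_implyP [Kx1 h]]; exists x1; split => //.
  by rewrite ltNge; apply/negP.
pose T := [set t : R | 0 <= t /\ Cd K (f + t *: d)].
have T0 : T 0 by split; rewrite ?scale0r ?addr0.
have Tub : forall t, T t -> t <= ev f x1 / (- ev d x1).
  move=> t [t0 ht]; have := ht x1 Kx1; rewrite evDl evZl => h.
  rewrite ler_pdivlMr; [nra | lra].
have hsT : has_sup T.
  by split; [exists 0 | exists (ev f x1 / - ev d x1) => t /Tub].
pose tp := sup T.
have tpge : forall t, T t -> t <= tp := fun t Tt => sup_upper_bound hsT Tt.
have c1 : 0 < (1 + c)^-1 by rewrite invr_gt0; lra.
have tpos : 0 < tp.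
  apply: (lt_le_trans c1); apply: tpge; split; first exact: ltW.
  exact: Cd_pert.
have Ctp : Cd K (f + tp *: d).
  move=> x Kx; rewrite evDl evZl leNgt; apply/negP => hneg.
  have fx := hf x Kx.
  case: (ltP (ev d x) 0) => dx; last by nra.
  pose eta := - (ev f x + tp * ev d x).
  pose eps := eta / (- ev d x).
  have epspos : 0 < eps by rewrite /eps divr_gt0 /eta; lra.
  have epsE : eps * (- ev d x) = eta by rewrite /eps mulfVK // lt0r_neq0 //; lra.
  have [t Tt tlt] := sup_adherent epspos hsT.
  have tle := tpge t Tt.
  case: Tt => t0 ht; have := ht x Kx; rewrite evDl evZl => hx.
  rewrite /eta in epsE; rewrite -/tp in tlt.
  nra.
have nD : ~ Dset K (f + tp *: d) d.
  move=> [c' c'0 h']; have := Cd_pert Ctp c'0 h'.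
  rewrite -addrA -scalerDl => H.
  have c1' : 0 < (1 + c')^-1 by rewrite invr_gt0; lra.
  have : T (tp + (1 + c')^-1) by split => //; lra.
  move/tpge; lra.
exists tp; split => //.
move=> d'; apply: (D_mono (C := 1 + tp * c)); first by nra.
move=> x Kx; rewrite evDl evZl.
have := hc x Kx; have := ler_norm (ev d x); have := hf x Kx; nra.
Qed.

Lemma mult_nonneg (R : realType) (n : nat) (K : set 'rV[R]_n) (u : 'cV[R]_n) f g (a : R) :
  gpt_cone K u -> Cd K f -> f != 0 -> Cd K g -> g = a *: f -> 0 <= a.
Proof.
move=> hK hf f0 hg ga; rewrite leNgt; apply/negP => a0.
have : Cd K (- f).
  have -> : - f = (- a)^-1 *: g.
    by rewrite ga scalerA mulrC invrN mulrN mulfV ?scaleN1r // lt_eqF.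
  by apply: Cd_scale => //; rewrite invr_ge0 oppr_ge0 ltW.
by move/(Cd_pointed hK hf)/eqP; rewrite (negPf f0).
Qed.

Lemma ext_base (R : realType) (n : nat) (K : set 'rV[R]_n) (u : 'cV[R]_n) f :
  gpt_cone K u -> Cd K f -> f != 0 ->
  (forall d, Dset K f d -> exists a, d = a *: f) -> ext K f.
Proof.
move=> hK hf f0 hall; split => // g h hg hh fgh.
have : Dset K f g.
  exists 1 => // x Kx; rewrite mul1r fgh evDl ger0_norm ?hg //.
  by rewrite lerDl hh.
move/hall => [a ga]; exists a => //; exact: mult_nonneg hK hf f0 hg ga.
Qed.

Lemma ext_scale (R : realType) (n : nat) (K : set 'rV[R]_n) f (a : R) :
  0 < a -> ext K f -> ext K (a *: f).
Proof.
move=> a0 [f0 hf H]; split.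
- by rewrite scaler_eq0 negb_or f0 andbT gt_eqF.
- exact: Cd_scale (ltW a0) hf.
move=> g h hg hh e.
have ai : 0 <= a^-1 by rewrite invr_ge0 ltW.
have e' : f = a^-1 *: g + a^-1 *: h.
  by rewrite -scalerDr -e scalerA mulVf ?scale1r // gt_eqF.
have [c c0 hc] := H _ _ (Cd_scale ai hg) (Cd_scale ai hh) e'.
exists c => //.
by rewrite scalerA mulrC -scalerA -hc scalerA mulfV ?scale1r // gt_eqF.
Qed.

Lemma span_D (R : realType) (n : nat) (K : set 'rV[R]_n) g (s : seq 'cV[R]_n) :
  Cd K g -> (forall v, v \in s -> Dset K g v) ->
  forall v, v \in span s -> Dset K g v.
Proof.
move=> hg hs v /(coord_span (X := in_tuple s)) ->.
apply: D_sum => // i; apply: D_scale; apply: hs.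
exact: mem_nth.
Qed.

Definition decomp (R : realType) (n : nat) (K : set 'rV[R]_n) (f : 'cV[R]_n) : Prop :=
  exists s : seq 'cV[R]_n, f = \sum_(g <- s) g /\ forall g, g \in s -> ext K g.

Lemma comb_eq (R : realType) (n : nat) (f d : 'cV[R]_n) (tp tm : R) :
  0 < tp -> 0 < tm ->
  f = (tm / (tp + tm)) *: (f + tp *: d) + (tp / (tp + tm)) *: (f + tm *: - d).
Proof.
move=> hp hm.
have hs : tp + tm != 0 by rewrite gt_eqF // addr_gt0.
rewrite !scalerDr !scalerA scalerN.
have -> : tm / (tp + tm) * tp = tp / (tp + tm) * tm by rewrite mulrAC [RHS]mulrAC [tm * tp]mulrC.
rewrite addrACA subrr addr0 -scalerDl.
by rewrite -mulrDl addrC mulfV // scale1r.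
Qed.

Lemma decomp_ind (R : realType) (n : nat) (K : set 'rV[R]_n) (u : 'cV[R]_n) (k : nat) :
  gpt_cone K u -> forall f, Cd K f ->
  (forall s : seq 'cV[R]_n, free s -> (forall v, v \in s -> Dset K f v) -> (size s <= k)%N) ->
  decomp K f.
Proof.
move=> hK; elim: k => [|k IH] f hf hb.
  have [->|f0] := eqVneq f 0; first by exists [::]; rewrite big_nil.
  have hs : forall v, v \in [:: f] -> Dset K f v.
    move=> v; rewrite inE => /eqP ->; exact: D_self.
  by have := hb [:: f]; rewrite seq1_free f0 => /(_ isT hs).
have [->|f0] := eqVneq f 0; first by exists [::]; rewrite big_nil.
have [hall|] := pselect (forall d, Dset K f d -> exists a, d = a *: f).
  exists [:: f]; rewrite big_seq1; split => // g; rewrite inE => /eqP ->.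
  exact: (ext_base hK).
move/existsNP => [d /not_implyP [Dd nmul]].
have [x0 [Kx0 Hx0]] := exists_x0 hK.
have fx0 : 0 < ev f x0.
  rewrite lt0r hf // andbT; apply/negP => /eqP /(Hx0 _ hf) /eqP; by rewrite (negPf f0).
pose b := ev d x0 / ev f x0.
pose d' := d - b *: f.
have Dd' : Dset K f d' by apply: D_add => //; apply: D_opp; apply: D_scale; apply: D_self.
have nmul' : forall a, d' <> a *: f.
  move=> a e; apply: nmul; exists (a + b).
  by rewrite scalerDl -e /d' subrK.
have d'x0 : ev d' x0 = 0.
  by rewrite /d' evBl evZl /b mulfVK ?subrr // gt_eqF.
have nCd : ~ Cd K d'.
  by move=> h; apply: (nmul' 0); rewrite scale0r; apply: Hx0.
have nCd' : ~ Cd K (- d').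
  move=> h; apply: (nmul' 0); rewrite scale0r.
  by apply/eqP; rewrite -oppr_eq0; apply/eqP; apply: Hx0 => //; rewrite evNl d'x0 oppr0.
have [tp [tpos C1 nD1 mono1]] := boundary hf Dd' nCd.
have [tm [tmpos C2 nD2 mono2]] := boundary hf (D_opp Dd') nCd'.
have [s1 [e1 x1]] : decomp K (f + tp *: d').
  apply: IH => // s fs sD.
  have fs' : free (d' :: s).
    by rewrite free_cons fs andbT; apply/negP => /(span_D C1 sD).
  have := hb _ fs'; apply.
  by move=> v; rewrite inE => /orP [/eqP -> // | /sD /mono1].
have [s2 [e2 x2]] : decomp K (f + tm *: - d').
  apply: IH => // s fs sD.
  have fs' : free (- d' :: s).
    by rewrite free_cons fs andbT; apply/negP => /(span_D C2 sD).
  have := hb _ fs'; apply.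
  move=> v; rewrite inE => /orP [/eqP -> | /sD /mono2 //]; exact: D_opp.
pose a1 := tm / (tp + tm).
pose a2 := tp / (tp + tm).
have a1p : 0 < a1 by rewrite divr_gt0 // addr_gt0.
have a2p : 0 < a2 by rewrite divr_gt0 // addr_gt0.
exists (map (fun g => a1 *: g) s1 ++ map (fun g => a2 *: g) s2); split.
  rewrite big_cat !big_map -!scaler_sumr -e1 -e2; exact: comb_eq.
move=> g; rewrite mem_cat => /orP [] /mapP [g' g's ->]; apply: ext_scale => //.
  exact: x1.
exact: x2.
Qed.

Lemma decompP (R : realType) (n : nat) (K : set 'rV[R]_n) (u : 'cV[R]_n) f :
  gpt_cone K u -> Cd K f -> decomp K f.
Proof.
move=> hK hf; apply: (decomp_ind (u := u) (k := \dim (fullv : {vspace 'cV[R]_n}))) => // s fs _.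
by move/eqP: fs => <-; apply: dimvS; apply: subvf.
Qed.

Lemma fn_hassup (R : realType) (n : nat) (K : set 'rV[R]_n) (u : 'cV[R]_n) e s0 :
  is_effect K u e -> states K u s0 ->
  has_sup [set `|ev e s| | s in states K u].
Proof.
move=> he hs0; split; first by exists `|ev e s0|; exists s0.
exists 1 => y [s hs <-]; have /andP[h1 h2] := he s hs.
by rewrite ger0_norm.
Qed.

Lemma fn_ub (R : realType) (n : nat) (K : set 'rV[R]_n) (u : 'cV[R]_n) e s :
  is_effect K u e -> states K u s -> `|ev e s| <= fnorm K u e.
Proof.
move=> he hs; apply: sup_upper_bound; first exact: fn_hassup hs.
by exists s.
Qed.

Lemma fn_le1 (R : realType) (n : nat) (K : set 'rV[R]_n) (u : 'cV[R]_n) e s0 :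
  is_effect K u e -> states K u s0 -> fnorm K u e <= 1.
Proof.
move=> he hs0; apply: ge_sup; first by exists `|ev e s0|; exists s0.
move=> y [s hs <-]; have /andP[h1 h2] := he s hs.
by rewrite ger0_norm.
Qed.

Lemma fn_adh (R : realType) (n : nat) (K : set 'rV[R]_n) (u : 'cV[R]_n) e s0 (eps : R) :
  is_effect K u e -> states K u s0 -> 0 < eps ->
  exists2 s, states K u s & fnorm K u e - eps < ev e s.
Proof.
move=> he hs0 heps.
have [y [s hs <-] lt] := sup_adherent heps (fn_hassup he hs0).
exists s => //; have /andP[h1 h2] := he s hs.
by rewrite -(ger0_norm h1).
Qed.

Lemma fn0 (R : realType) (n : nat) (K : set 'rV[R]_n) (u : 'cV[R]_n) s0 :
  states K u s0 -> fnorm K u 0 = 0.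
Proof.
move=> hs0; rewrite /fnorm.
have -> : [set `|ev 0 s| | s in states K u] = [set 0 : R].
  apply/seteqP; split => y.
    by move=> [s _ <-]; rewrite ev0l normr0.
  by move=> ->; exists s0 => //; rewrite ev0l normr0.
exact: sup1.
Qed.

Lemma fn_le_sum (R : realType) (n : nat) (K : set 'rV[R]_n) (u : 'cV[R]_n) s0
  (r : seq 'cV[R]_n) :
  states K u s0 -> (forall g, g \in r -> is_effect K u g) ->
  fnorm K u (\sum_(g <- r) g) <= \sum_(g <- r) fnorm K u g.
Proof.
move=> hs0 hr; apply: ge_sup; first by exists `|ev (\sum_(g <- r) g) s0|; exists s0.
move=> y [s hs <-]; rewrite ev_suml (le_trans (ler_norm_sum _ _ _)) //.
rewrite big_seq_cond [X in _ <= X]big_seq_cond; apply: ler_sum => g /andP[gr _].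
exact: fn_ub (hr g gr) hs.
Qed.

Lemma effect_le (R : realType) (n : nat) (K : set 'rV[R]_n) (u : 'cV[R]_n) e g :
  Cd K g -> Cd K (e - g) -> is_effect K u e -> is_effect K u g.
Proof.
move=> hg heg he s hs; have /andP[h1 h2] := he s hs.
have := hg s hs.1; have := heg s hs.1; rewrite evBl => a b.
apply/andP; split => //; lra.
Qed.

Lemma fn_pos (R : realType) (n : nat) (K : set 'rV[R]_n) (u : 'cV[R]_n) e :
  gpt_cone K u -> is_effect K u e -> e != 0 -> 0 < fnorm K u e.
Proof.
move=> hK he e0; have hf := Cd_of_effect hK he.
have [x0 [Kx0 Hx0]] := exists_x0 hK.
have fx0 : 0 < ev e x0.
  rewrite lt0r hf // andbT; apply/negP => /eqP /(Hx0 _ hf) /eqP; by rewrite (negPf e0).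
have x00 : x0 != 0 by apply/negP => /eqP x00; move: fx0; rewrite x00 ev0r ltxx.
have hs := state_of hK Kx0 x00.
apply: (lt_le_trans _ (fn_ub he hs)).
rewrite evZr normrM mulr_gt0 // normr_gt0 ?gt_eqF //.
rewrite invr_gt0; case: hK => _ _ _ _ upos; exact: upos.
Qed.

Lemma indec_ext (R : realType) (n : nat) (K : set 'rV[R]_n) (u : 'cV[R]_n) e :
  gpt_cone K u -> is_indecomposable K u e -> ext K e.
Proof.
move=> hK [he [e0 H]]; split => //; first exact: Cd_of_effect hK he.
move=> g h hg hh egh.
have eg : is_effect K u g.
  by apply: (effect_le hg _ he); rewrite egh addrAC subrr add0r.
have eh : is_effect K u h.
  by apply: (effect_le hh _ he); rewrite egh addrK.
have [->|g0] := eqVneq g 0; first by exists 0; rewrite ?scale0r.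
have [h0|h0] := eqVneq h 0.
  by exists 1; rewrite ?scale1r // egh h0 addr0.
have [c1 [c2 [c1p [c2p [ec1 ec2]]]]] := H g h eg eh g0 h0 egh.
exists c1^-1; first by rewrite invr_ge0 ltW.
by rewrite ec1 scalerA mulVf ?scale1r // gt_eqF.
Qed.

Lemma ext_indec (R : realType) (n : nat) (K : set 'rV[R]_n) (u : 'cV[R]_n) e :
  gpt_cone K u -> is_effect K u e -> ext K e -> is_indecomposable K u e.
Proof.
move=> hK he [e0 hf H]; split => //; split => // e1 e2 he1 he2 e10 e20 ee.
have c1' := Cd_of_effect hK he1; have c2' := Cd_of_effect hK he2.
have [c cp ce] := H _ _ c1' c2' ee.
have [c' cp' ce'] := H _ _ c2' c1' (etrans ee (addrC _ _)).
have cn : c != 0 by apply/eqP => c0; move: e10; rewrite ce c0 scale0r eqxx.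
have cn' : c' != 0 by apply/eqP => c0; move: e20; rewrite ce' c0 scale0r eqxx.
exists c^-1, c'^-1; split; first by rewrite invr_gt0 lt0r cn.
split; first by rewrite invr_gt0 lt0r cn'.
by rewrite ce ce' !scalerA !mulVf ?scale1r.
Qed.

Lemma keyL (R : realType) (n : nat) (K : set 'rV[R]_n) (u : 'cV[R]_n) s0 (l0 : R) e :
  gpt_cone K u -> states K u s0 ->
  (forall e : 'cV[R]_n, is_pure_effect K u e -> is_indecomposable K u e ->
     ev e s0 = l0) ->
  ext K e -> is_effect K u e -> ev e s0 = fnorm K u e * l0.
Proof.
move=> hK hs0 Hyp xe he.
have [e0 _ _] := xe.
pose N := fnorm K u e.
have Np : 0 < N := fn_pos hK he e0.
have N1 : N <= 1 := fn_le1 he hs0.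
pose eh := N^-1 *: e.
have bnd : forall s, states K u s -> 0 <= ev e s <= N.
  move=> s hs; have /andP[h1 h2] := he s hs; rewrite h1 /=.
  by have := fn_ub he hs; rewrite ger0_norm.
have ehe : is_effect K u eh.
  move=> s hs; have /andP[h1 h2] := bnd s hs.
  rewrite /eh evZl; apply/andP; split; first by rewrite mulr_ge0 // invr_ge0 ltW.
  by rewrite mulrC ler_pdivrMr // mul1r.
have xeh : ext K eh by apply: ext_scale => //; rewrite invr_gt0.
have supa : forall a : R, 0 <= a -> (forall s, states K u s -> a * ev eh s <= 1) -> a <= 1.
  move=> a a0 ha; rewrite leNgt; apply/negP => a1.
  have epsp : 0 < N - N / a.
    rewrite subr_gt0 ltr_pdivrMr ?(lt_trans ltr01) //.
    by rewrite -[X in X < _]mulr1 ltr_pM2l.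
  have [s hs lt] := fn_adh he hs0 epsp.
  have := ha s hs; rewrite /eh evZl.
  have : N / a < ev e s by move: lt; rewrite -/N; lra.
  rewrite ltr_pdivrMr ?(lt_trans ltr01) // => h.
  rewrite mulrA leNgt => /negP; apply.
  have -> : a * N^-1 * ev e s = (ev e s * a) / N by rewrite mulrC mulrA.
  by rewrite ltr_pdivlMr // mul1r.
have pure : is_pure_effect K u eh.
  split => // e1 e2 t he1 he2 /andP[t0 t1] ee.
  have [eh0 hfeh H] := xeh.
  have C1 : Cd K (t *: e1) by apply: Cd_scale; [exact: ltW | exact: Cd_of_effect hK he1].
  have C2 : Cd K ((1 - t) *: e2).
    by apply: Cd_scale; [rewrite subr_ge0 ltW | exact: Cd_of_effect hK he2].
  have [c1 c10 ec1] := H _ _ C1 C2 ee.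
  have [c2 c20 ec2] := H _ _ C2 C1 (etrans ee (addrC _ _)).
  have tn : t != 0 by rewrite gt_eqF.
  have tn' : 1 - t != 0 by rewrite subr_eq0 eq_sym lt_eqF.
  have e1E : e1 = (c1 / t) *: eh by rewrite mulrC -scalerA -ec1 scalerA mulVf ?scale1r.
  have e2E : e2 = (c2 / (1 - t)) *: eh by rewrite mulrC -scalerA -ec2 scalerA mulVf ?scale1r.
  have le1 : c1 / t <= 1.
    apply: supa; first by rewrite divr_ge0 // ltW.
    move=> s hs; have /andP[_ h] := he1 s hs; by rewrite -evZl -e1E.
  have le2 : c2 / (1 - t) <= 1.
    apply: supa; first by rewrite divr_ge0 // subr_ge0 ltW.
    move=> s hs; have /andP[_ h] := he2 s hs; by rewrite -evZl -e2E.
  have sum1 : c1 + c2 = 1.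
    have : (c1 + c2 - 1) *: eh = 0 by rewrite !scalerDl -ec1 -ec2 -ee scaleN1r subrr.
    by move/eqP; rewrite scaler_eq0 (negPf eh0) orbF subr_eq0 => /eqP.
  move: le1 le2; rewrite ler_pdivrMr // ?subr_gt0 // ler_pdivrMr ?subr_gt0 // !mul1r => le1 le2.
  have c1t : c1 = t by lra.
  have c2t : c2 = 1 - t by lra.
  by rewrite e1E e2E c1t c2t !mulfV ?scale1r.
have := Hyp eh pure (ext_indec hK ehe xeh).
have Nn : N != 0 by rewrite gt_eqF.
by rewrite /eh evZl => h; rewrite -h mulrA mulfV ?mul1r.
Qed.

Lemma elems_effect (R : realType) (n : nat) (K : set 'rV[R]_n) (u : 'cV[R]_n) e
  (s : seq 'cV[R]_n) :
  is_effect K u e -> e = \sum_(g <- s) g -> (forall g, g \in s -> ext K g) ->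
  forall g, g \in s -> is_effect K u g.
Proof.
move=> he es xs g gs.
have [_ Cg _] := xs g gs.
apply: (effect_le Cg _ he).
rewrite es (big_rem g gs) /= addrAC subrr add0r.
apply: Cd_sum => h hr; have [_ Ch _] := xs h (mem_rem hr); exact: Ch.
Qed.

Lemma part1 (R : realType) (n : nat) (K : set 'rV[R]_n) (u : 'cV[R]_n) s0 (l0 : R) :
  gpt_cone K u -> states K u s0 ->
  (forall e : 'cV[R]_n, is_pure_effect K u e -> is_indecomposable K u e ->
     ev e s0 = l0) ->
  forall (Omega : finType) (M : Omega -> 'cV[R]_n),
     is_indecomposable_measurement K u M ->
     decoding_power K u M * l0 = 1.
Proof.
move=> hK hs0 Hyp Omega M [[Meff Msum] Mind].
have each : forall x, ev (M x) s0 = fnorm K u (M x) * l0.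
  move=> x; have [e0|e0] := eqVneq (M x) 0.
    by rewrite e0 (fn0 hs0) ev0l mul0r.
  exact: (keyL hK hs0 Hyp (indec_ext hK (Mind x e0)) (Meff x)).
have <- : ev (\sum_x M x) s0 = 1 by rewrite Msum; case: hs0.
rewrite /decoding_power mulr_suml ev_suml.
by apply: eq_bigr => x _; rewrite each.
Qed.

Lemma part_ub (R : realType) (n : nat) (K : set 'rV[R]_n) (u : 'cV[R]_n) s0 (l0 : R) :
  gpt_cone K u -> states K u s0 ->
  (forall e : 'cV[R]_n, is_pure_effect K u e -> is_indecomposable K u e ->
     ev e s0 = l0) -> 0 <= l0 ->
  forall (Omega : finType) (M : Omega -> 'cV[R]_n),
     is_measurement K u M -> decoding_power K u M * l0 <= 1.
Proof.
move=> hK hs0 Hyp l00 Omega M [Meff Msum].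
have each : forall x, fnorm K u (M x) * l0 <= ev (M x) s0.
  move=> x.
  have [s [es xs]] := decompP hK (Cd_of_effect hK (Meff x)).
  have gse := elems_effect (Meff x) es xs.
  have h1 := ler_wpM2r l00 (fn_le_sum hs0 gse); rewrite -es in h1.
  apply: (le_trans h1).
  rewrite es ev_suml mulr_suml big_seq_cond [X in _ <= X]big_seq_cond.
  apply: ler_sum => g /andP[gs _].
  by rewrite (keyL hK hs0 Hyp (xs g gs) (gse g gs)).
have <- : ev (\sum_x M x) s0 = 1 by rewrite Msum; case: hs0.
rewrite /decoding_power mulr_suml ev_suml.
by apply: ler_sum => x _; apply: each.
Qed.

Unset Implicit Arguments.

Theorem proposition3 (R : realType) (n : nat) (K : set 'rV[R]_n) (u : 'cV[R]_n)
  (s0 : 'rV[R]_n) (lambda0 : R) :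
  gpt_cone K u ->
  states K u s0 ->
  (forall e : 'cV[R]_n, is_pure_effect K u e -> is_indecomposable K u e ->
     ev e s0 = lambda0) ->
  (forall (Omega : finType) (M : Omega -> 'cV[R]_n),
     is_indecomposable_measurement K u M ->
     decoding_power K u M = 1 / lambda0) /\
  info_storability K u = (1 / lambda0)%:E.
Proof.
move=> hK hs0 Hyp.
have ueff : is_effect K u u.
  by move=> s [_ ->]; rewrite ler01 lexx.
have [s [us xs]] := decompP hK (Cd_of_effect hK ueff).
have gse := elems_effect ueff us xs.
pose M := fun i : 'I_(size s) => nth 0 s i.
have Mmeas : is_measurement K u M.
  split; first by move=> i; apply: gse; rewrite mem_nth.
  by rewrite us (big_nth 0) big_mkord.
have Mind : is_indecomposable_measurement K u M.
  split => // i _; apply: ext_indec => //; first exact: (proj1 Mmeas).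
  by apply: xs; rewrite mem_nth.
have hM := part1 hK hs0 Hyp Mind.
have dp0 : 0 <= decoding_power K u M.
  apply: sumr_ge0 => i _; apply: le_trans (fn_ub (proj1 Mmeas i) hs0).
  exact: normr_ge0.
have l0p : 0 < lambda0 by nra.
have l0n : lambda0 != 0 by rewrite gt_eqF.
have conv : forall (Omega : finType) (M' : Omega -> 'cV[R]_n),
    decoding_power K u M' * lambda0 = 1 -> decoding_power K u M' = 1 / lambda0.
  by move=> Omega M' h; apply: (mulIf l0n); rewrite h div1r mulVf.
split.
  by move=> Omega M' hM'; apply: conv; exact: part1 hK hs0 Hyp _ _ hM'.
apply: le_anti; apply/andP; split.
  apply: ge_ereal_sup => y [[m M'] hM' <-]; rewrite lee_fin.
  by rewrite ler_pdivlMr //; exact: (part_ub hK hs0 Hyp (ltW l0p) hM').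
apply: le_ereal_sup_tmp; exists (decoding_power K u M)%:E.
  by exists (existT _ (size s) M).
by rewrite lee_fin (conv _ _ hM).
Qed.
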